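(* Let $d\ge2$, let $\mathfrak{F}$ be an ordered field or a field that has more than two elements, and let $\mathcal{G}$ be a field-definable coordinate geometry over $\mathfrak{F}$ (of dimension $d$). Then $$\mathrm{Aut}(\mathcal{G})=\mathrm{AffAut}(\mathcal{G})\circ\mathrm{Aut}_{\mathrm{ind}}(\mathfrak{F})=\{A\circ\widetilde{\alpha}: A\in\mathrm{AffAut}(\mathcal{G}),\ \alpha\in\mathrm{Aut}(\mathfrak{F})\}.$$ Moreover, for each automorphism $g$ of $\mathcal{G}$, the decomposition $g=A\circ\widetilde{\alpha}$ with $A\in\mathrm{AffAut}(\mathcal{G})$ and $\widetilde{\alpha}\in\mathrm{Aut}_{\mathrm{ind}}(\mathfrak{F})$ is unique.
   Context: A field is $\langle F,+,\cdot,0,1\rangle$; an ordered field is $\langle F,+,\cdot,0,1,\le\rangle$. ''Definable'' means first-order definable without parameters. For points of $F^d$: ${\mathsf{Col}}(\vec p,\vec q,\vec r)$ iff $\vec q=\vec p+\lambda(\vec r-\vec p)$ for some $\lambda\in F$ or $\vec r=\vec p$; for an ordered field, ${\mathsf{Bw}}(\vec p,\vec q,\vec r)$ iff $\vec q=\vec p+\lambda(\vec r-\vec p)$ for some $\lambda\in F$ with $0\le\lambda\le1$. An $n$-ary relation on $F^d$ is definable over $\mathfrak{F}$ iff the corresponding $dn$-ary relation on $F$ obtained by listing coordinates of the $n$ points consecutively is definable in $\mathfrak{F}$. A coordinate geometry over a field (resp. ordered field) $\mathfrak{F}$ is a model with universe $F^d$, only relation symbols in its language, in which ${\mathsf{Col}}$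 (resp. ${\mathsf{Bw}}$) is definable; it is field-definable if all its relations are definable over $\mathfrak{F}$. An affine transformation of $F^d$ is an invertible linear map followed by a translation; $\mathrm{AffAut}(\mathcal{G})$ is the set of automorphisms of $\mathcal{G}$ that are affine transformations. For a map $f:F\to F$, $\widetilde f:F^d\to F^d$ is $\widetilde f(\langle p_1,\dots,p_d\rangle)=\langle f(p_1),\dots,f(p_d)\rangle$, and $\mathrm{Aut}_{\mathrm{ind}}(\mathfrak{F})=\{\widetilde\alpha:\alpha\in\mathrm{Aut}(\mathfrak{F})\}$. *)

(* Defs.v *)
From HB Require Import structures.
From mathcomp Require Import all_boot all_order all_algebra.
Set Implicit Arguments. Unset Strict Implicit. Unset Printing Implicit Defensive.
Import Order.TTheory GRing.Theory Num.Theory.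
Local Open Scope ring_scope.

(* We encode "a field or an ordered field" as
   a field F together with [ord : option (F -> F -> Prop)]:
   None = the pure field language <F,+,.,0,1>,
   Some le = the ordered field language <F,+,.,0,1,<=>. *)
Definition is_field_order (F : fieldType) (le : F -> F -> Prop) : Prop :=
  (forall x, le x x) /\
  (forall x y, le x y -> le y x -> x = y) /\
  (forall x y z, le x y -> le y z -> le x z) /\
  (forall x y, le x y \/ le y x) /\
  (forall x y z, le x y -> le (x + z) (y + z)) /\
  (forall x y, le 0 x -> le 0 y -> le 0 (x * y)).

Inductive fterm : Type :=
| FVar of nat | FZero | FOne | FAdd of fterm & fterm | FMul of fterm & fterm.

Inductive fform : Type :=
| FEq of fterm & fterm
| FLe of fterm & fterm
| FNot of fform
| FAnd of fform & fform
| FEx of nat & fform.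

Fixpoint fterm_eval (F : fieldType) (e : nat -> F) (t : fterm) : F :=
  match t with
  | FVar k => e k
  | FZero => 0
  | FOne => 1
  | FAdd t1 t2 => fterm_eval e t1 + fterm_eval e t2
  | FMul t1 t2 => fterm_eval e t1 * fterm_eval e t2
  end.

Definition upd (T : Type) (e : nat -> T) (k : nat) (x : T) : nat -> T :=
  fun j => if j == k then x else e j.

(* In the pure field language (ord = None) the symbol <= is absent; an atom
   [FLe] is then interpreted as False, which does not change the class of
   definable relations (False is definable by 0 = 1). *)
Fixpoint fholds (F : fieldType) (ord : option (F -> F -> Prop))
    (e : nat -> F) (phi : fform) : Prop :=
  match phi with
  | FEq t1 t2 => fterm_eval e t1 = fterm_eval e t2
  | FLe t1 t2 => match ord with
                 | Some le => le (fterm_eval e t1) (fterm_eval e t2)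
                 | None => False
                 end
  | FNot p => ~ fholds ord e p
  | FAnd p q => fholds ord e p /\ fholds ord e q
  | FEx k p => exists x : F, fholds ord (upd e k x) p
  end.

Notation point F d := 'rV[F]_d.

(* An n-ary relation on F^d is definable over the (ordered) field iff the
   dn-ary relation on F obtained by listing the coordinates of the n points
   consecutively is definable without parameters: variable i*d+j holds the
   j-th coordinate of the i-th point. *)
Definition field_definable (F : fieldType) (ord : option (F -> F -> Prop))
    (d n : nat) (R : ('I_n -> point F d) -> Prop) : Prop :=
  exists phi : fform, forall e : nat -> F,
    fholds ord e phi <-> R (fun i : 'I_n => \row_(j < d) e (i * d + j)%N).

Definition Col (F : fieldType) (d : nat) (p q r : point F d) : Prop :=
  (exists lam : F, q = p + lam *: (r - p)) \/ r = p.

Definition Bw (F : fieldType) (le : F -> F -> Prop) (d : nat)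
    (p q r : point F d) : Prop :=
  exists lam : F, [/\ le 0 lam, le lam 1 & q = p + lam *: (r - p)].

Definition basic_rel (F : fieldType) (ord : option (F -> F -> Prop)) (d : nat)
    (p q r : point F d) : Prop :=
  match ord with None => Col p q r | Some le => Bw le p q r end.

(* A structure G with universe F^d whose language consists only of relation
   symbols, indexed by I, symbol i having arity ar i and interpretation R i. *)
Inductive gform (I : Type) (ar : I -> nat) : Type :=
| GRel (i : I) of ('I_(ar i) -> nat)
| GEq of nat & nat
| GNot of gform ar
| GAnd of gform ar & gform ar
| GEx of nat & gform ar.

Fixpoint gholds (U I : Type) (ar : I -> nat) (R : forall i, ('I_(ar i) -> U) -> Prop)
    (e : nat -> U) (phi : gform ar) : Prop :=
  match phi with
  | GRel i v => R i (fun k => e (v k))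
  | GEq a b => e a = e b
  | GNot p => ~ gholds R e p
  | GAnd p q => gholds R e p /\ gholds R e q
  | GEx k p => exists x : U, gholds R (upd e k x) p
  end.

Definition geom_definable3 (U I : Type) (ar : I -> nat)
    (R : forall i, ('I_(ar i) -> U) -> Prop) (T : U -> U -> U -> Prop) : Prop :=
  exists phi : gform ar, forall e : nat -> U, gholds R e phi <-> T (e 0%N) (e 1%N) (e 2%N).

Definition field_definable_coord_geom (F : fieldType) (ord : option (F -> F -> Prop))
    (d : nat) (I : Type) (ar : I -> nat)
    (R : forall i, ('I_(ar i) -> point F d) -> Prop) : Prop :=
  geom_definable3 R (@basic_rel F ord d) /\
  (forall i, field_definable ord (R i)).

Definition geom_aut (U I : Type) (ar : I -> nat)
    (R : forall i, ('I_(ar i) -> U) -> Prop) (g : U -> U) : Prop :=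
  bijective g /\ (forall i (x : 'I_(ar i) -> U), R i x <-> R i (fun k => g (x k))).

Definition affine_transf (F : fieldType) (d : nat) (A : point F d -> point F d) : Prop :=
  exists (M : 'M[F]_d) (b : point F d), M \in unitmx /\ forall p, A p = p *m M + b.

Definition aff_aut (F : fieldType) (d : nat) (I : Type) (ar : I -> nat)
    (R : forall i, ('I_(ar i) -> point F d) -> Prop) (A : point F d -> point F d) : Prop :=
  affine_transf A /\ geom_aut R A.

Definition field_aut (F : fieldType) (ord : option (F -> F -> Prop)) (a : F -> F) : Prop :=
  bijective a /\ a 0 = 0 /\ a 1 = 1 /\
  (forall x y, a (x + y) = a x + a y) /\
  (forall x y, a (x * y) = a x * a y) /\
  (match ord with
   | Some le => forall x y, le x y <-> le (a x) (a y)
   | None => True end).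

Definition tilde (F : fieldType) (d : nat) (a : F -> F) (p : point F d) : point F d :=
  \row_(j < d) a (p 0 j).

(* Main.v *)
From HB Require Import structures.
From mathcomp Require Import all_boot all_order all_algebra ring.
Require Import Defs.
From Stdlib Require Import FunctionalExtensionality ClassicalEpsilon Classical.
Set Implicit Arguments. Unset Strict Implicit. Unset Printing Implicit Defensive.
Import GRing.Theory.
Local Open Scope ring_scope.

Section Vec.
Variables (F : fieldType) (d : nat).
Local Notation V := 'rV[F]_d.

Definition ind (u v : V) := forall a b : F, a *: u + b *: v = 0 -> a = 0 /\ b = 0.

Lemma scale_eq0 (a : F) (v : V) : a *: v = 0 -> v <> 0 -> a = 0.
Proof. by move=> /eqP; rewrite scaler_eq0 => /orP [/eqP //| /eqP ->]. Qed.

Lemma ind_neq0l u v : ind u v -> u <> 0.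
Proof. move=> H u0; have [] := H 1 0; first by rewrite u0 !scaler0 scale0r addr0. by move/eqP; rewrite oner_eq0. Qed.

Lemma ind_sym u v : ind u v -> ind v u.
Proof. move=> H a b e; have [] := H b a; [by rewrite addrC | by []]. Qed.

Lemma ind_neq0r u v : ind u v -> v <> 0.
Proof. by move/ind_sym/ind_neq0l. Qed.

Lemma ind_col u v : ind u v <-> ~ Col 0 v u.
Proof.
split.
  move=> H [[lam E]|E]; last exact: (ind_neq0l H).
  have H2 : lam *: u + (-1) *: v = 0 by rewrite E add0r subr0 scaleN1r subrr.
  have [_ /eqP] := H _ _ H2.
  by rewrite oppr_eq0 oner_eq0.
move=> H a b E.
have u0 : u <> 0 by move=> u0; apply: H; right.
have b0 : b = 0.
  case: (eqVneq b 0) => // b0; exfalso; apply: H; left; exists (- (a / b)).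
  rewrite add0r subr0; apply: (scalerI b0).
  rewrite scalerA mulrN mulrC mulfVK // scaleNr; apply/eqP; rewrite eq_sym -subr_eq0 -opprD E oppr0 eqxx //.
have a0 : a = 0 by move: E; rewrite b0 scale0r addr0 => E'; exact: scale_eq0 E' u0.
by [].
Qed.

Lemma ind_scale u v a b : ind u v -> a != 0 -> b != 0 -> ind (a *: u) (b *: v).
Proof.
move=> H a0 b0 x y; rewrite !scalerA => /H [/eqP] ; rewrite mulf_eq0 (negbTE a0) orbF => /eqP ->.
by move/eqP; rewrite mulf_eq0 (negbTE b0) orbF => /eqP ->.
Qed.

Lemma ind_addl u v : ind u v -> ind u (u + v).
Proof.
move=> H a b; rewrite scalerDr addrA -scalerDl => /H [e b0]; rewrite b0 addr0 in e; by split.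
Qed.

End Vec.

Lemma vec_eq0 (F : fieldType) d (u w : 'rV[F]_d) : w = 0 -> (forall j, u 0 j = w 0 j) -> u = 0.
Proof. by move=> E H; rewrite -E; apply/rowP. Qed.

Lemma vec_eq (F : fieldType) d (u w : 'rV[F]_d) : (forall j, u 0 j = w 0 j) -> u = w.
Proof. by move=> H; apply/rowP. Qed.

Section FTAG.
Variables (F : fieldType) (d : nat) (g : 'rV[F]_d -> 'rV[F]_d).
Local Notation V := 'rV[F]_d.
Hypothesis g0 : g 0 = 0.
Hypothesis ginj : injective g.
Hypothesis gsurj : forall y, exists x, g x = y.
Hypothesis gcol : forall p q r, Col p q r <-> Col (g p) (g q) (g r).
Variable mu : F.
Hypothesis mu0 : mu != 0.
Hypothesis mu1 : mu != 1.

Lemma gcolF p q r : Col p q r -> Col (g p) (g q) (g r).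
Proof. exact: (proj1 (gcol p q r)). Qed.
Lemma gcolB p q r : Col (g p) (g q) (g r) -> Col p q r.
Proof. exact: (proj2 (gcol p q r)). Qed.

Definition PL (a b c x : V) := exists y z, y <> z /\ Col a y b /\ Col a z c /\ Col y x z.
Definition DJ (u v w z : V) := forall y, ~ (Col u y v /\ Col w y z).

Lemma PL_g a b c x : PL a b c x -> PL (g a) (g b) (g c) (g x).
Proof.
case=> y [z [yz [h1 [h2 h3]]]]; exists (g y), (g z); split; first by move=> /ginj.
by split; [apply: gcolF | split; apply: gcolF].
Qed.

Lemma DJ_g u v w z : DJ u v w z -> DJ (g u) (g v) (g w) (g z).
Proof.
move=> H y [h1 h2]; have [x ex] := gsurj y; apply: (H x); rewrite -ex in h1 h2.
by split; apply: gcolB.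
Qed.

Lemma ind_g u v : ind u v -> ind (g u) (g v).
Proof. rewrite !ind_col => H; rewrite -g0 => /gcolB; exact H. Qed.

Lemma col0 (y p : V) : p <> 0 -> Col 0 y p -> exists l, y = l *: p.
Proof. by move=> p0 [[l ->]|//]; exists l; rewrite add0r subr0. Qed.

Lemma K1 p q : ind p q -> PL 0 p q (p + q) /\ DJ 0 p q (p + q).
Proof.
move=> H; have p0 := ind_neq0l H; have q0 := ind_neq0r H.
have mu1' : 1 - mu != 0 by rewrite subr_eq0 eq_sym.
split.
  exists ((1 - mu)^-1 *: p), (mu^-1 *: q); split.
    move=> /eqP; rewrite -subr_eq0 => /eqP E.
    have E2 : (1 - mu)^-1 *: p + (- mu^-1) *: q = 0.
      by apply: (vec_eq0 E) => j; rewrite !mxE; ring.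
    have [_ /eqP] := H _ _ E2.
    by rewrite oppr_eq0 invr_eq0 (negbTE mu0).
  split; first by left; exists ((1 - mu)^-1); rewrite add0r subr0.
  split; first by left; exists (mu^-1); rewrite add0r subr0.
  left; exists mu; apply: vec_eq => j; rewrite !mxE; field; by rewrite mu1' mu0.
move=> y [/(col0 p0) [l ->]] [[b E]|E].
  have E1 : l *: p - (q + b *: (p + q - q)) = 0 by rewrite -E subrr.
  have E2 : (l - b) *: p + (-1) *: q = 0.
    by apply: (vec_eq0 E1) => j; rewrite !mxE; ring.
  have [_ /eqP] := H _ _ E2.
  by rewrite oppr_eq0 oner_eq0.
by apply: p0; apply: (addIr q); rewrite add0r.
Qed.

Lemma K2 p q x : ind p q -> PL 0 p q x -> DJ 0 p q x -> exists s, x = q + s *: p.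
Proof.
move=> H; have p0 := ind_neq0l H; have q0 := ind_neq0r H.
move=> [y [z [yz [/(col0 p0) [l ey] [/(col0 q0) [k ez] [[m ex]|ezy]]]]]] Hd; last first.
  by exfalso; apply: yz.
subst y z x.
case: (eqVneq (m * k) 1) => t1.
  exists (l - m * l); apply: vec_eq => j; rewrite !mxE.
  transitivity (l * p 0 j + (m * k) * q 0 j - m * l * p 0 j); first by ring.
  by rewrite t1; ring.
have t1' : 1 - m * k != 0 by rewrite subr_eq0 eq_sym.
exfalso; apply: (Hd (((1 - m * k)^-1 * l * (1 - m)) *: p)); split.
  by left; exists ((1 - m * k)^-1 * l * (1 - m)); rewrite add0r subr0.
left; exists ((1 - m * k)^-1); apply: vec_eq => j; rewrite !mxE; field; done.
Qed.

Lemma ADD p q : ind p q -> g (p + q) = g p + g q.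
Proof.
move=> H; have H' := ind_g H.
have [P1 D1] := K1 H.
have [P2 D2] := K1 (ind_sym H); rewrite addrC in P2 D2.
have P1' := PL_g P1; have D1' := DJ_g D1; have P2' := PL_g P2; have D2' := DJ_g D2.
rewrite g0 in P1' D1' P2' D2'.
have [s es] := K2 H' P1' D1'.
have [t et] := K2 (ind_sym H') P2' D2'.
have E : (s - 1) *: g p + (1 - t) *: g q = 0.
  have E1 : g (p + q) - g (p + q) = 0 by rewrite subrr.
  rewrite {1}es et in E1.
  by apply: (vec_eq0 E1) => j; rewrite !mxE; ring.
have [/eqP + _] := H' _ _ E; rewrite subr_eq0 => /eqP s1.
by rewrite es s1 scale1r addrC.
Qed.


Lemma ADD0 p q : p = 0 \/ q = 0 \/ ind p q -> g (p + q) = g p + g q.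
Proof.
case=> [->|[->|H]]; first by rewrite add0r g0 add0r.
  by rewrite addr0 g0 addr0.
exact: ADD.
Qed.

Lemma gneq0 v : v <> 0 -> g v <> 0.
Proof. by move=> v0 gv; apply: v0; apply: ginj; rewrite gv g0. Qed.

Lemma scal_ex v t : v <> 0 -> exists l, g (t *: v) = l *: g v.
Proof.
move=> v0; have : Col 0 (t *: v) v by left; exists t; rewrite add0r subr0.
move/gcolF; rewrite g0; exact: col0 (gneq0 v0).
Qed.

Lemma transfer (al : F -> F) u v : (forall t, g (t *: u) = al t *: g u) -> ind u v ->
  forall t, g (t *: v) = al t *: g v.
Proof.
move=> Hu H t.
have u0 := ind_neq0l H; have v0 := ind_neq0r H.
have al0 : al 0 = 0.
  by apply: (scale_eq0 _ (gneq0 u0)); rewrite -Hu scale0r g0.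
case: (eqVneq t 0) => [->|t0]; first by rewrite al0 !scale0r g0.
have w0 := ind_neq0r (ind_addl H).
have [l el] := scal_ex t w0.
have [k ek] := scal_ex t v0.
have E1 := ADD (ind_scale H t0 t0).
rewrite -scalerDr el Hu ek (ADD H) in E1.
have E : (al t - l) *: g u + (k - l) *: g v = 0.
  have E2 : (al t *: g u + k *: g v) - l *: (g u + g v) = 0 by rewrite E1 subrr.
  by apply: (vec_eq0 E2) => j; rewrite !mxE; ring.
have HH : ind (g u) (g v) := ind_g H.
have [/eqP e1 /eqP e2] := HH _ _ E.
move: e1 e2; rewrite !subr_eq0 => /eqP e1 /eqP e2.
by rewrite ek e2 e1.
Qed.

Variables (u1 u2 : V).
Hypothesis H12 : ind u1 u2.

Definition alpha (t : F) : F :=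
  proj1_sig (constructive_indefinite_description _ (scal_ex t (ind_neq0l H12))).

Lemma alphaP t : g (t *: u1) = alpha t *: g u1.
Proof. rewrite /alpha; case: constructive_indefinite_description => //. Qed.

Lemma SC v t : g (t *: v) = alpha t *: g v.
Proof.
have al0 : alpha 0 = 0.
  by apply: (scale_eq0 _ (gneq0 (ind_neq0l H12))); rewrite -alphaP scale0r g0.
case: (eqVneq v 0) => [->|v0]; first by rewrite !scaler0 g0 scaler0.
have [Hv|Hv] := classic (ind u1 v); first exact: transfer alphaP Hv t.
have [c ec] : exists c, v = c *: u1.
  apply: (col0 (ind_neq0l H12)); move: Hv; rewrite ind_col.
  by case: (classic (Col 0 v u1)) => // H /(_ H).
have c0 : c != 0 by apply/eqP => c0; move: v0; rewrite ec c0 scale0r eqxx.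
have H2v : ind u2 v.
  rewrite ec; move=> a b E; rewrite scalerA in E.
  have H21 : ind u2 u1 := ind_sym H12.
  have [-> /eqP] := H21 _ _ E.
  by rewrite mulf_eq0 (negbTE c0) orbF => /eqP.
exact: transfer (transfer alphaP H12) H2v t.
Qed.


Lemma alpha0 : alpha 0 = 0.
Proof. by apply: (scale_eq0 _ (gneq0 (ind_neq0l H12))); rewrite -alphaP scale0r g0. Qed.

Lemma alpha1 : alpha 1 = 1.
Proof.
apply/eqP; rewrite -subr_eq0; apply/eqP; apply: (scale_eq0 _ (gneq0 (ind_neq0l H12))).
by rewrite scalerBl -alphaP !scale1r subrr.
Qed.

Lemma ADDs a b u v : ind u v -> g (a *: u + b *: v) = alpha a *: g u + alpha b *: g v.
Proof.
move=> H; rewrite ADD0 ?SC //.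
case: (eqVneq a 0) => [->|a0]; first by left; rewrite scale0r.
case: (eqVneq b 0) => [->|b0]; first by right; left; rewrite scale0r.
by right; right; apply: ind_scale.
Qed.

Lemma alphaD s t : alpha (s + t) = alpha s + alpha t.
Proof.
have E1 := ADDs (s + t) t H12.
have E2 := ADDs s t (ind_addl H12).
have X : (s + t) *: u1 + t *: u2 = s *: u1 + t *: (u1 + u2).
  by apply: vec_eq => j; rewrite !mxE; ring.
rewrite X E2 (ADD H12) in E1.
have E : (alpha (s + t) - alpha s - alpha t) *: g u1 + 0 *: g u2 = 0.
  have E3 : (alpha (s + t) *: g u1 + alpha t *: g u2) -
     (alpha s *: g u1 + alpha t *: (g u1 + g u2)) = 0 by rewrite E1 subrr.
  by apply: (vec_eq0 E3) => j; rewrite !mxE; ring.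
have HH : ind (g u1) (g u2) := ind_g H12.
have [/eqP + _] := HH _ _ E.
by rewrite subr_eq0 => /eqP e; rewrite -e; ring.
Qed.

Lemma alphaM s t : alpha (s * t) = alpha s * alpha t.
Proof.
apply/eqP; rewrite -subr_eq0; apply/eqP; apply: (scale_eq0 _ (gneq0 (ind_neq0l H12))).
by rewrite scalerBl -alphaP -scalerA SC alphaP scalerA subrr.
Qed.

Lemma alpha_inj : injective alpha.
Proof.
move=> s t e; have : g (s *: u1) = g (t *: u1) by rewrite !alphaP e.
move/ginj/eqP; rewrite -subr_eq0 -scalerBl => /eqP /scale_eq0 /(_ (ind_neq0l H12)).
by move/eqP; rewrite subr_eq0 => /eqP.
Qed.

Lemma alpha_surj l : exists c, alpha c = l.
Proof.
have [x ex] := gsurj (l *: g u1).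
have : Col (g 0) (g x) (g u1) by left; exists l; rewrite g0 add0r subr0 ex.
move/gcolB/(col0 (ind_neq0l H12)) => [c ec].
exists c; apply/eqP; rewrite -subr_eq0; apply/eqP.
apply: (scale_eq0 _ (gneq0 (ind_neq0l H12))).
by rewrite scalerBl -alphaP -ec ex subrr.
Qed.


Lemma decomp x : g x = \sum_(j < d) alpha (x 0 j) *: g 'e_j.
Proof.
have key : forall k, g (\sum_(j < d | (j < k)%N) x 0 j *: 'e_j) =
    \sum_(j < d | (j < k)%N) alpha (x 0 j) *: g 'e_j.
  elim=> [|k IH]; first by rewrite !big_pred0 ?g0.
  case: (ltnP k d) => kd; last first.
    have e : forall j : 'I_d, (j < k.+1)%N = (j < k)%N.
      by move=> j; rewrite ltnS (ltnW (leq_trans (ltn_ord j) kd)) (leq_trans (ltn_ord j) kd).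
    by rewrite !(eq_bigl _ _ e).
  pose i := Ordinal kd.
  have spl : forall (G : 'I_d -> V), \sum_(j < d | (j < k.+1)%N) G j = G i + \sum_(j < d | (j < k)%N) G j.
    move=> G; rewrite (bigD1 i) /= ?ltnSn //; congr (_ + _); apply: eq_bigl => j.
    by rewrite ltnS -val_eqE /=; case: ltngtP.
  rewrite !spl -IH ADD0 ?SC //.
  set S := \sum_(j < d | (j < k)%N) x 0 j *: 'e_j.
  case: (eqVneq (x 0 i) 0) => [->|c0]; first by left; rewrite scale0r.
  case: (eqVneq S 0) => [->|S0]; first by right; left.
  right; right => a b E.
  have Si : S 0 i = 0.
    rewrite /S summxE big1 // => j jk; rewrite !mxE.
    have -> : (i == j) = false by apply/negbTE; rewrite -val_eqE /= neq_ltn jk orbT.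
    by rewrite andbF mulr0.
  have := congr1 (fun M : V => M 0 i) E; rewrite !mxE Si !eqxx /= mulr1 mulr0 addr0 => /eqP.
  rewrite !mulf_eq0 (negbTE c0) orbF => /eqP a0.
  split => //; move: E; rewrite a0 scale0r add0r => /scale_eq0; apply; exact/eqP.
have := key d.
have e : forall j : 'I_d, (j < d)%N = true by move=> j; rewrite ltn_ord.
by rewrite !(eq_bigl _ _ e) -row_sum_delta.
Qed.

End FTAG.

Lemma upd_comp (U W : Type) (f : U -> W) (e : nat -> U) k x :
  (fun n => f (upd e k x n)) = upd (fun n => f (e n)) k (f x).
Proof. by apply: functional_extensionality => n; rewrite /upd; case: (n == k). Qed.

Lemma gholds_aut (U I : Type) (ar : I -> nat) (R : forall i, ('I_(ar i) -> U) -> Prop)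
  (g : U -> U) : geom_aut R g -> forall phi e,
  gholds R e phi <-> gholds R (fun n => g (e n)) phi.
Proof.
case=> [[h gh hg] HR]; elim=> [i v|a b|p IH|p IHp q IHq|k p IH] e /=.
- exact: HR.
- by split=> [->//|]; move/(can_inj gh).
- by rewrite IH.
- by rewrite IHp IHq.
- split=> [[x Hx]|[x Hx]].
    by exists (g x); rewrite -upd_comp -IH.
  exists (h x); rewrite IH upd_comp hg; exact: Hx.
Qed.

Lemma geom_def_aut (U I : Type) (ar : I -> nat) (R : forall i, ('I_(ar i) -> U) -> Prop)
  (T : U -> U -> U -> Prop) (g : U -> U) : geom_aut R g -> geom_definable3 R T ->
  forall p q r, T p q r <-> T (g p) (g q) (g r).
Proof.
move=> Hg [phi Hphi] p q r.
pose e := fun n : nat => match n with 0 => p | 1 => q | _ => r end.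
have := Hphi e; have := Hphi (fun n => g (e n)); rewrite -gholds_aut //= => <- <-; done.
Qed.

Section FieldAut.
Variables (F : fieldType) (ord : option (F -> F -> Prop)) (a : F -> F).
Hypothesis Ha : field_aut ord a.

Lemma fterm_aut e t : fterm_eval (fun n => a (e n)) t = a (fterm_eval e t).
Proof.
case: Ha => _ [a0 [a1 [aD [aM _]]]].
elim: t => [n|||t1 IH1 t2 IH2|t1 IH1 t2 IH2] //=; by rewrite ?IH1 ?IH2 ?aD ?aM.
Qed.

Lemma fholds_aut phi e : fholds ord e phi <-> fholds ord (fun n => a (e n)) phi.
Proof.
case: Ha => [[b ab ba] [_ [_ [_ [_ Hle]]]]].
elim: phi e => [t1 t2|t1 t2|p IH|p IHp q IHq|k p IH] e /=.
- rewrite !fterm_aut; by split=> [->//|]; move/(can_inj ab).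
- rewrite !fterm_aut; case: ord Hle => [le|] //=.
- by rewrite IH.
- by rewrite IHp IHq.
- split=> [[x Hx]|[x Hx]].
    by exists (a x); rewrite -upd_comp -IH.
  exists (b x); rewrite IH upd_comp ba; exact: Hx.
Qed.

Variable d : nat.

Definition envx n (x : 'I_n -> 'rV[F]_d) (m : nat) : F :=
  match insub (m %/ d)%N, insub (m %% d)%N with Some i, Some j => x i 0 j | _, _ => 0 end.

Lemma envxE n (x : 'I_n -> 'rV[F]_d) (i : 'I_n) (j : 'I_d) : envx x (i * d + j) = x i 0 j.
Proof.
have d0 : (0 < d)%N by case: d j => [[]|].
rewrite /envx divnMDl // divn_small // addn0 modnMDl modn_small //.
by rewrite !valK.
Qed.

Lemma fdef_aut n (R : ('I_n -> 'rV[F]_d) -> Prop) :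
  field_definable ord R -> forall x, R x <-> R (fun k => tilde a (x k)).
Proof.
move=> [phi Hphi] x.
have E1 : (fun i : 'I_n => \row_(j < d) envx x (i * d + j)) = x.
  by apply: functional_extensionality => i; apply/rowP => j; rewrite mxE envxE.
have E2 : (fun i : 'I_n => \row_(j < d) a (envx x (i * d + j))) = (fun k => tilde a (x k)).
  by apply: functional_extensionality => i; apply/rowP => j; rewrite !mxE envxE.
have H1 := Hphi (envx x); rewrite E1 in H1.
have H2 := Hphi (fun m => a (envx x m)); rewrite /= E2 in H2.
by rewrite -H1 -H2; apply: fholds_aut.
Qed.

End FieldAut.

Section Ord.
Variables (F : fieldType) (le : F -> F -> Prop).
Hypothesis Hle : is_field_order le.

Lemma le_refl x : le x x. Proof. by case: Hle => h _; apply: h. Qed.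
Lemma le_anti x y : le x y -> le y x -> x = y. Proof. by case: Hle => _ [h _]; apply: h. Qed.
Lemma le_trans x y z : le x y -> le y z -> le x z. Proof. by case: Hle => _ [_ [h _]]; apply: h. Qed.
Lemma le_total x y : le x y \/ le y x. Proof. by case: Hle => _ [_ [_ [h _]]]; apply: h. Qed.
Lemma le_addr x y z : le x y -> le (x + z) (y + z). Proof. by case: Hle => _ [_ [_ [_ [h _]]]]; apply: h. Qed.
Lemma le_mul x y : le 0 x -> le 0 y -> le 0 (x * y). Proof. by case: Hle => _ [_ [_ [_ [_ h]]]]; apply: h. Qed.

Lemma le_sub x y : le x y <-> le 0 (y - x).
Proof.
split=> [h|h]; first by rewrite -(subrr x); apply: le_addr.
by have := le_addr x h; rewrite add0r subrK.
Qed.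

Lemma le_sub1 x y : le x y -> le 0 (y - x). Proof. exact: (proj1 (le_sub x y)). Qed.
Lemma le_sub2 x y : le 0 (y - x) -> le x y. Proof. exact: (proj2 (le_sub x y)). Qed.

Lemma le_add x y : le 0 x -> le 0 y -> le 0 (x + y).
Proof. move=> hx hy; apply: (le_trans hy); have := le_addr y hx; by rewrite add0r. Qed.

Lemma le01 : le 0 1.
Proof.
case: (le_total 0 1) => // h.
have h1 : le 0 (-1) by move/le_sub1: h; rewrite sub0r.
have := le_mul h1 h1; rewrite mulrNN mulr1 => h2.
by have := le_anti h h2 => /eqP; rewrite oner_eq0.
Qed.

Lemma le_neg x : ~ le 0 x -> le x 0.
Proof. by case: (le_total 0 x). Qed.

Lemma le_opp x : le x 0 -> le 0 (- x).
Proof. by move/le_sub1; rewrite sub0r. Qed.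

Lemma le_inv x : le 0 x -> x != 0 -> le 0 x^-1.
Proof.
move=> hx x0; case: (le_total 0 x^-1) => // h.
have := le_mul hx (le_opp h); rewrite mulrN mulfV // => h2.
have h3 : le (-1) 0 by apply: le_sub2; rewrite sub0r opprK; exact: le01.
have : (-1 : F) = 0 by apply: le_anti.
by move/eqP; rewrite oppr_eq0 oner_eq0.
Qed.

Lemma one_neq0 (x : F) : le 0 x -> 1 + x != 0.
Proof.
move=> hx; apply/eqP => e.
have h : le 1 (1 + x) by have := le_addr 1 hx; rewrite add0r addrC.
rewrite e in h; by have /eqP := le_anti h le01; rewrite oner_eq0.
Qed.

Lemma two_neq01 : (1 + 1 : F) != 0 /\ (1 + 1 : F) != 1.
Proof.
split; first exact: one_neq0 le01.
by apply/eqP => e; have := congr1 (fun t => t - 1) e; rewrite addrK subrr => /eqP; rewrite oner_eq0.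
Qed.

Lemma pos_transfer (phi : F -> F) :
  phi 1 = 1 -> (forall x y, phi (x + y) = phi x + phi y) -> (forall x y, phi (x * y) = phi x * phi y) ->
  (forall t, le 0 t -> le t 1 -> le 0 (phi t) /\ le (phi t) 1) ->
  forall z, le 0 z -> le 0 (phi z).
Proof.
move=> p1 pD pM H01 z hz.
have z1 := one_neq0 hz.
pose w := z / (1 + z).
have hw0 : le 0 w by apply: le_mul => //; apply: le_inv => //; apply: le_add => //; exact: le01.
have hw1 : le w 1.
  apply: le_sub2; have -> : 1 - w = (1 + z)^-1 by rewrite /w; field.
  by apply: le_inv => //; apply: le_add => //; exact: le01.
have [p0 p1'] := H01 w hw0 hw1.
have e : phi w * (1 + phi z) = phi z by rewrite -p1 -pD -pM /w mulfVK.
have pw1 : 1 - phi w != 0.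
  apply/eqP => /eqP; rewrite subr_eq0 => /eqP pw; move: e; rewrite -pw mul1r => /eqP.
  by rewrite -subr_eq0 addrK oner_eq0.
have -> : phi z = phi w * (1 - phi w)^-1.
  apply: (mulIf pw1); rewrite mulfVK //; move: e => /eqP; rewrite -subr_eq0 => /eqP e.
  apply/eqP; rewrite -subr_eq0; apply/eqP.
  transitivity (- (phi w * (1 + phi z) - phi z)); first by ring.
  by rewrite e oppr0.
apply: le_mul => //; apply: le_inv => //.
exact: le_sub1 p1'.
Qed.

Variable d : nat.
Local Notation V := 'rV[F]_d.

Lemma col_bw (p q r : V) : Col p q r <-> (Bw le p q r \/ Bw le q p r \/ Bw le p r q).
Proof.
split.
  case=> [[l ->]|->]; last first.
    right; left; exists 1; split; [exact: le01|exact: le_refl|].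
    by apply: vec_eq => j; rewrite !mxE; ring.
  have [h0|h0] := classic (le 0 l).
    have [h1|h1] := classic (le l 1).
      by left; exists l; split.
    have h1' : le 1 l by case: (le_total l 1).
    have l0 : l != 0.
      apply/eqP => l0; rewrite l0 in h1'.
      by have /eqP := le_anti h1' le01; rewrite oner_eq0.
    right; right; exists l^-1; split.
    - exact: le_inv.
    - apply: le_sub2; have -> : 1 - l^-1 = (l - 1) * l^-1 by field.
      apply: le_mul; [exact: le_sub1|exact: le_inv].
    - by apply: vec_eq => j; rewrite !mxE; field.
  have hl := le_opp (le_neg h0).
  have l1 : 1 - l != 0 by exact: one_neq0 hl.
  right; left; exists ((- l) * (1 - l)^-1); split.
  - apply: le_mul => //; apply: le_inv => //; exact: le_add le01 hl.
  - apply: le_sub2; have -> : 1 - (- l) * (1 - l)^-1 = (1 - l)^-1 by field.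
    apply: le_inv => //; exact: le_add le01 hl.
  - by apply: vec_eq => j; rewrite !mxE; field.
case=> [[l [_ _ ->]]|[[l [_ _ E]]|[l [_ _ E]]]].
- by left; exists l.
- case: (eqVneq l 1) => [l1|l1].
    by right; rewrite E l1 scale1r addrC subrK.
  left; exists (- l * (1 - l)^-1).
  have l1' : 1 - l != 0 by rewrite subr_eq0 eq_sym.
  apply: vec_eq => j; have := congr1 (fun M : V => M 0 j) E; rewrite !mxE => ->; field; done.
- case: (eqVneq l 0) => [l0|l0].
    by right; rewrite E l0 scale0r addr0.
  left; exists l^-1; rewrite E; apply: vec_eq => j; rewrite !mxE; field; done.
Qed.

End Ord.

Section Misc.
Variables (F : fieldType) (d : nat).
Local Notation V := 'rV[F]_d.

Lemma col_trans (p q r c : V) : Col (p - c) (q - c) (r - c) <-> Col p q r.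
Proof.
split.
  case=> [[l E]|E]; last by right; apply: (addIr (- c)).
  left; exists l; apply: vec_eq => j; have := congr1 (fun M : V => M 0 j) E.
  rewrite !mxE => e; transitivity ((q 0 j - c 0 j) + c 0 j); first by ring.
  by rewrite e; ring.
case=> [[l ->]|->]; last by right.
by left; exists l; apply: vec_eq => j; rewrite !mxE; ring.
Qed.

Lemma bw_aff le (M : 'M[F]_d) (b p q r : V) : M \in unitmx ->
  Bw le (p *m M + b) (q *m M + b) (r *m M + b) <-> Bw le p q r.
Proof.
move=> Mu; split; case=> l [h0 h1 E]; exists l; split => //.
  have E' : q *m M = (p + l *: (r - p)) *m M.
    apply: (addIr b); rewrite E mulmxDl -scalemxAl mulmxBl.
    by apply: vec_eq => j; rewrite !mxE; ring.
  by have := congr1 (fun v => v *m invmx M) E'; rewrite !mulmxK.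
by rewrite E mulmxDl -scalemxAl mulmxBl; apply: vec_eq => j; rewrite !mxE; ring.
Qed.

Lemma tildeK (a b : F -> F) : cancel a b -> cancel (@tilde F d a) (tilde b).
Proof. by move=> ab p; apply/rowP => j; rewrite !mxE ab. Qed.

Lemma tilde_const (a : F -> F) t : tilde a (const_mx t : V) = const_mx (a t).
Proof. by apply/rowP => j; rewrite !mxE. Qed.

Lemma tilde0 (a : F -> F) : a 0 = 0 -> tilde a (0 : V) = 0.
Proof. by move=> a0; apply/rowP => j; rewrite !mxE a0. Qed.

Lemma tilde_e (a : F -> F) j : a 0 = 0 -> a 1 = 1 -> tilde a ('e_j : V) = 'e_j.
Proof. move=> a0 a1; apply/rowP => k; rewrite !mxE; case: (k == j); rewrite ?andbT ?andbF /= ?a0 // eqxx /= a1. Qed.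

End Misc.

Lemma field_aut_inv (F : fieldType) (ord : option (F -> F -> Prop)) (a : F -> F) :
  field_aut ord a -> exists b, [/\ field_aut ord b, cancel a b & cancel b a].
Proof.
case=> [[b ab ba] [a0 [a1 [aD [aM Ho]]]]]; exists b; split=> //.
split; first by exists a.
split; first by rewrite -a0 ab.
split; first by rewrite -a1 ab.
split; first by move=> x y; apply: (can_inj ab); rewrite aD !ba.
split; first by move=> x y; apply: (can_inj ab); rewrite aM !ba.
case: ord Ho => // le Ho x y; by rewrite (Ho (b x)) !ba.
Qed.

Lemma addf_sub (F : fieldType) (a : F -> F) : (forall x y, a (x + y) = a x + a y) ->
  forall x y, a (y - x) = a y - a x.
Proof.
move=> aD x y; apply: (addIr (a x)); rewrite -aD subrK; by rewrite subrK.
Qed.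

Theorem proposition4 (F : fieldType) (ord : option (F -> F -> Prop)) :
  (* F is an ordered field, or a field with more than two elements *)
  ((exists le, ord = Some le /\ is_field_order le) \/
   (ord = None /\ exists a b c : F, [/\ a <> b, a <> c & b <> c])) ->
  forall (d : nat), (2 <= d)%N ->
  forall (I : Type) (ar : I -> nat) (R : forall i, ('I_(ar i) -> 'rV[F]_d) -> Prop),
    field_definable_coord_geom ord R ->
    (* Aut(G) = AffAut(G) o Aut_ind(F) *)
    (forall g : 'rV[F]_d -> 'rV[F]_d,
        geom_aut R g <->
        exists (A : 'rV[F]_d -> 'rV[F]_d) (a : F -> F),
          [/\ aff_aut R A, field_aut ord a & forall p, g p = A (tilde a p)]) /\
    (* uniqueness of the decomposition *)
    (forall (A1 A2 : 'rV[F]_d -> 'rV[F]_d) (a1 a2 : F -> F),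
        aff_aut R A1 -> aff_aut R A2 -> field_aut ord a1 -> field_aut ord a2 ->
        (forall p, A1 (tilde a1 p) = A2 (tilde a2 p)) ->
        (forall p, A1 p = A2 p) /\ (forall x, a1 x = a2 x)).
Proof.
move=> Hcase d d2 I ar R [Hdef Hfd].
pose i0 : 'I_d := Ordinal (ltnW d2).
pose i1 : 'I_d := Ordinal d2.
have [mu [mu0 mu1]] : exists mu : F, mu != 0 /\ mu != 1.
  case: Hcase => [[le [_ Hle]]|[_ [a [b [c [ab ac bc]]]]]].
    by exists (1 + 1); exact: two_neq01 Hle.
  have [Ha|Ha] := boolP ((a != 0) && (a != 1)); first by exists a; apply/andP.
  have [Hb|Hb] := boolP ((b != 0) && (b != 1)); first by exists b; apply/andP.
  exists c; move: Ha Hb; rewrite !negb_and !negbK.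
  case/orP => /eqP ea; case/orP => /eqP eb; split; apply/eqP => ec;
    first [by apply: ab; congruence | by apply: ac; congruence | by apply: bc; congruence].
have colaut : forall g, geom_aut R g -> forall p q r, Col p q r <-> Col (g p) (g q) (g r).
  move=> g Hg p q r; have Hb := geom_def_aut Hg Hdef.
  case: Hcase => [[le [eo Hle]]|[eo _]]; subst ord; last exact: Hb.
  have Hb' : forall p q r : 'rV[F]_d, Bw le p q r <-> Bw le (g p) (g q) (g r) := Hb.
  rewrite (col_bw Hle p q r) (col_bw Hle (g p) (g q) (g r)).
  by rewrite (Hb' p q r) (Hb' q p r) (Hb' p r q).
have fpres : forall a, field_aut ord a -> forall i x, R i x <-> R i (fun k => tilde a (x k)).
  move=> a Ha i x. have := fdef_aut Ha (Hfd i) x. exact.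
split.
  move=> g; split; last first.
    case=> A [a [[HA [[Ai AK KA] HAR]] Ha Eg]].
    have [b [Hb ab ba]] := field_aut_inv Ha.
    split.
      exists (fun p => tilde b (Ai p)).
        by move=> p; rewrite Eg AK (tildeK ab).
      by move=> p; rewrite Eg (tildeK ba) KA.
    move=> i x; rewrite (fpres a Ha i x) HAR.
    have -> : (fun k => A (tilde a (x k))) = (fun k => g (x k)).
      by apply: functional_extensionality => k; rewrite Eg.
    by [].
  move=> Hg.
  have gcol := colaut g Hg.
  have [[gi ggi gig] HgR] := Hg.
  pose g' := fun x => g x - g 0.
  have g'0 : g' 0 = 0 by rewrite /g' subrr.
  have g'inj : injective g' by move=> x y /addIr /(can_inj ggi).
  have g'surj : forall y, exists x, g' x = y.
    by move=> y; exists (gi (y + g 0)); rewrite /g' gig addrK.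
  have g'col : forall p q r, Col p q r <-> Col (g' p) (g' q) (g' r).
    by move=> p q r; rewrite /g' col_trans.
  have H12 : ind ('e_i0 : 'rV[F]_d) 'e_i1.
    move=> a b E.
    have := congr1 (fun v : 'rV[F]_d => v 0 i0) E.
    have := congr1 (fun v : 'rV[F]_d => v 0 i1) E.
    have n01 : (i0 == i1) = false by apply/negbTE; rewrite -val_eqE.
    have n10 : (i1 == i0) = false by apply/negbTE; rewrite -val_eqE.
    by rewrite !mxE !eqxx n01 n10 /= !mulr0 !mulr1 add0r addr0.
  pose al := alpha g'0 g'inj g'col H12.
  have decomp' := decomp g'0 g'inj g'surj g'col mu0 mu1 H12.
  have al0 : al 0 = 0 := alpha0 g'0 g'inj g'col H12.
  have al1 : al 1 = 1 := alpha1 g'0 g'inj g'col H12.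
  have alD : forall s t, al (s + t) = al s + al t := alphaD g'0 g'inj g'surj g'col mu0 mu1 H12.
  have alM : forall s t, al (s * t) = al s * al t := alphaM g'0 g'inj g'surj g'col mu0 mu1 H12.
  have alI : injective al := @alpha_inj _ _ _ g'0 g'inj g'col _ _ H12.
  have alS : forall l, exists c, al c = l := alpha_surj g'0 g'inj g'surj g'col H12.
  pose M : 'M[F]_d := \matrix_(j, k) g' 'e_j 0 k.
  have gM : forall x, g x = tilde al x *m M + g 0.
    move=> x; rewrite -[g x](subrK (g 0)); congr (_ + _).
    rewrite mulmx_sum_row; have := decomp' x; rewrite /g' => ->.
    apply: eq_bigr => j _; rewrite mxE; congr (_ *: _).
    by apply/rowP => k; rewrite !mxE.
  have Mu : M \in unitmx.
    rewrite -row_full_unit; apply/row_fullP.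
    exists (\matrix_(i, k) tilde al (gi ('e_i + g 0)) 0 k).
    apply/row_matrixP => i; rewrite row_mul row1.
    have -> : row i (\matrix_(i, k) tilde al (gi ('e_i + g 0)) 0 k) = tilde al (gi ('e_i + g 0)).
      by apply/rowP => k; rewrite !mxE.
    by apply: (addIr (g 0)); rewrite -gM gig.
  have [b bK] : exists b : F -> F, cancel b al.
    exists (fun l => proj1_sig (constructive_indefinite_description _ (alS l))).
    by move=> l; case: constructive_indefinite_description.
  have Kb : cancel al b by move=> x; apply: alI; rewrite bK.
  pose A := fun p : 'rV[F]_d => p *m M + g 0.
  have fa : field_aut ord al.
    split; first by exists b.
    do 4 (split => //).
    case: Hcase => [[le [eo Hle]]|[eo _]]; subst ord => //=.
    have Hb : forall p q r : 'rV[F]_d, Bw le p q r <-> Bw le (g p) (g q) (g r) := geom_def_aut Hg Hdef.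
    have HBt : forall p q r : 'rV[F]_d, Bw le p q r <-> Bw le (tilde al p) (tilde al q) (tilde al r).
      move=> p q r; apply: (iff_trans (Hb p q r)).
      rewrite (gM p) (gM q) (gM r); exact: bw_aff.
    have bw01 : forall t, Bw le (0 : 'rV[F]_d) (const_mx t) (const_mx 1) <-> le 0 t /\ le t 1.
      move=> t; split.
        case=> l [h0 h1 E]; have := congr1 (fun v : 'rV[F]_d => v 0 i0) E.
        by rewrite !mxE subr0 add0r mulr1 => ->.
      case=> h0 h1; exists t; split => //.
      by apply/rowP => j; rewrite !mxE subr0 add0r mulr1.
    have i01 : forall t, (le 0 t /\ le t 1) <-> (le 0 (al t) /\ le (al t) 1).
      move=> t; rewrite -!bw01 HBt tilde0 // !tilde_const al1.
      by [].
    have posa : forall z, le 0 z -> le 0 (al z) :=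
      fun z => @pos_transfer F le Hle al al1 alD alM (fun t h0 h1 => proj1 (i01 t) (conj h0 h1)) z.
    have b1 : b 1 = 1 by rewrite -al1 Kb.
    have bD : forall x y, b (x + y) = b x + b y.
      by move=> x y; apply: alI; rewrite alD !bK.
    have bM : forall x y, b (x * y) = b x * b y.
      by move=> x y; apply: alI; rewrite alM !bK.
    have i01b : forall t, le 0 t -> le t 1 -> le 0 (b t) /\ le (b t) 1.
      by move=> t h0 h1; apply/i01; rewrite bK.
    have posb : forall z, le 0 z -> le 0 (b z) :=
      fun z => @pos_transfer F le Hle b b1 bD bM i01b z.
    move=> x y; split => h.
      apply: (le_sub2 Hle); rewrite -(addf_sub alD); exact: (posa _ (le_sub1 Hle h)).
    apply: (le_sub2 Hle); have := posb _ (le_sub1 Hle h).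
    by rewrite -(addf_sub alD) Kb.
  have [b' [fb Kb' bK']] := field_aut_inv fa.
  have Ag : forall p, A p = g (tilde b' p) by move=> p; rewrite gM (tildeK bK').
  exists A, al; split; [ | exact: fa | by move=> p; rewrite gM].
  split; first by exists M, (g 0).
  split.
    exists (fun p => (p - g 0) *m invmx M).
      by move=> p; rewrite /A addrK mulmxK.
    by move=> p; rewrite /A mulmxKV // subrK.
  move=> i x; rewrite (fpres b' fb i x) HgR.
  have -> : (fun k => g (tilde b' (x k))) = (fun k => A (x k)).
    by apply: functional_extensionality => k; rewrite Ag.
  by [].
move=> A1 A2 a1 a2 [[M1 [c1 [M1u E1]]] _] [[M2 [c2 [M2u E2]]] _] fa1 fa2 E.
have [_ [a10 [a11 _]]] := fa1.
have [_ [a20 [a21 _]]] := fa2.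
have ec : c1 = c2 by have := E 0; rewrite E1 E2 !tilde0 // !mul0mx !add0r.
have eM : M1 = M2.
  apply/row_matrixP => j; have := E 'e_j; rewrite E1 E2 !tilde_e // ec => /addIr.
  by rewrite -!rowE.
have et : forall p : 'rV[F]_d, tilde a1 p = tilde a2 p.
  move=> p; have := E p; rewrite E1 E2 ec eM => /addIr /(congr1 (fun v => v *m invmx M2)).
  by rewrite !mulmxK.
split; first by move=> p; rewrite E1 E2 ec eM.
move=> x; have := et (const_mx x); move/(congr1 (fun v : 'rV[F]_d => v 0 i0)).
by rewrite !mxE.
Qed.
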